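(* (ZFC) $\mathfrak{d}\le\mathfrak{i}_{cl}$.
   Context: An independent family is a set $\mathcal{I}\subseteq\mathcal{P}(\omega)$ such that for all disjoint finite $\mathcal{A}_0,\mathcal{A}_1\subseteq\mathcal{I}$, the set $\bigcap_{x\in\mathcal{A}_0}x\cap\bigcap_{x\in\mathcal{A}_1}(\omega\setminus x)$ is infinite; it is a maximal independent family if it is maximal under inclusion among independent families. $\mathfrak{i}_{cl}$ is the smallest cardinality of a collection of closed subsets of $\mathcal{P}(\omega)$ (identified with $2^\omega$ via characteristic functions) whose union is a maximal independent family. $\mathfrak{d}$ is the dominating number, the least size of a family $\mathcal{F}\subseteq\omega^\omega$ such that every $g\in\omega^\omega$ is eventually dominated by some member of $\mathcal{F}$. *)

(* Defs.v *)
(* Subsets of omega are represented by characteristic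
   functions nat -> bool (P(omega) identified with 2^omega). *)
From Stdlib Require Import List Arith.
Import ListNotations.

Definition subset_omega := nat -> bool.
Definition family := subset_omega -> Prop.

(* Closed subsets of 2^omega (product topology): the complement is open, i.e.
   every point outside A has a basic clopen neighbourhood
   [x|n] = {y | forall k < n, y k = x k} disjoint from A. *)
Definition closed_cantor (A : subset_omega -> Prop) : Prop :=
  forall x, ~ A x -> exists n, forall y, (forall k, k < n -> y k = x k) -> ~ A y.

Definition bool_comb_infinite (A0 A1 : list subset_omega) : Prop :=
  forall N, exists m, N <= m /\
    (forall x, In x A0 -> x m = true) /\ (forall x, In x A1 -> x m = false).

Definition independent (I : family) : Prop :=
  forall A0 A1 : list subset_omega,
    (forall x, In x A0 -> I x) -> (forall x, In x A1 -> I x) ->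
    (forall x, In x A0 -> ~ In x A1) ->
    bool_comb_infinite A0 A1.

Definition maximal_independent (I : family) : Prop :=
  independent I /\
  forall J : family, (forall x, I x -> J x) -> independent J -> forall x, J x -> I x.

Definition eventually_dominated (g f : nat -> nat) : Prop :=
  exists N, forall n, N <= n -> g n <= f n.

Definition dominating {K : Type} (F : K -> nat -> nat) : Prop :=
  forall g : nat -> nat, exists k, eventually_dominated g (F k).

(* Main.v *)
Require Import Defs.
From Stdlib Require Import List Arith Lia Classical ClassicalEpsilon FunctionalExtensionality PropExtensionality Cantor.
From mathcomp Require classical_sets.
Import ListNotations.
Local Open Scope bool_scope.

Definition agree {A} (n : nat) (a b : nat -> A) := forall i, i < n -> a i = b i.
Definition upd {A} (f : nat -> A) (n : nat) (v : A) : nat -> A :=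
  fun i => if Nat.eqb i n then v else f i.

Lemma agree_sym {A} n (a b : nat -> A) : agree n a b -> agree n b a.
Proof. intros H i Hi; symmetry; auto. Qed.
Lemma agree_trans {A} n (a b c : nat -> A) : agree n a b -> agree n b c -> agree n a c.
Proof. intros H1 H2 i Hi; rewrite H1; auto. Qed.
Lemma agree_mono {A} n m (a b : nat -> A) : m <= n -> agree n a b -> agree m a b.
Proof. intros Hm H i Hi; apply H; lia. Qed.

Lemma list_bound {X} (l : list X) (R : X -> nat -> Prop) :
  (forall x B B', B <= B' -> R x B -> R x B') ->
  (forall x, In x l -> exists B, R x B) -> exists B, forall x, In x l -> R x B.
Proof.
  intros Hm; induction l as [|a l IH]; intros H.
  - exists 0; intros x [].
  - destruct (H a (or_introl eq_refl)) as [B1 HB1].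
    destruct IH as [B2 HB2]. { intros x Hx; apply H; right; auto. }
    exists (B1 + B2); intros x [<-|Hx].
    + apply (Hm _ B1); auto; lia.
    + apply (Hm _ B2); auto; lia.
Qed.

Lemma nat_bound (n : nat) (R : nat -> nat -> Prop) :
  (forall x B B', B <= B' -> R x B -> R x B') ->
  (forall x, x < n -> exists B, R x B) -> exists B, forall x, x < n -> R x B.
Proof.
  intros Hm H. destruct (list_bound (seq 0 n) R Hm) as [B HB].
  { intros x Hx; apply in_seq in Hx; apply H; lia. }
  exists B; intros x Hx; apply HB, in_seq; lia.
Qed.

Section Compact.
Variables (A : Type) (a0 : A) (LA : list A) (P : (nat -> A) -> Prop)
  (Q : (nat -> A) -> nat -> Prop).
Hypothesis HLA : forall y, P y -> forall i, In (y i) LA.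
Hypothesis Hclosed : forall y, ~ P y -> exists N, forall y', agree N y' y -> ~ P y'.
Hypothesis Hloc : forall y, P y -> exists p N, Q y p /\ forall y', P y' -> agree N y' y -> Q y' p.

Definition bad (n : nat) (f : nat -> A) :=
  forall B, exists y, P y /\ agree n y f /\ forall p, p <= B -> ~ Q y p.

Lemma bad_agree n f f' : agree n f f' -> bad n f -> bad n f'.
Proof.
  intros Hf H B; destruct (H B) as [y [Py [Ay Hy]]]; exists y; split; auto; split; auto.
  eapply agree_trans; eauto.
Qed.

Lemma bad_step n f : bad n f -> exists a, bad (S n) (upd f n a).
Proof.
  intros Hb. apply NNPP; intro Hn.
  assert (H : forall a, In a LA -> exists B, forall y, P y -> agree (S n) y (upd f n a) -> exists p, p <= B /\ Q y p).
  { intros a _. apply NNPP; intro Hc. apply Hn; exists a. intro B.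
    apply NNPP; intro Hd. apply Hc; exists B. intros y Py Ay.
    apply NNPP; intro He. apply Hd; exists y; repeat split; auto.
    intros p Hp Hq; apply He; eauto. }
  destruct (list_bound LA (fun a B => forall y, P y -> agree (S n) y (upd f n a) -> exists p, p <= B /\ Q y p)) as [B HB].
  { intros x B B' HBB' HR y Py Ay; destruct (HR y Py Ay) as [p [Hp Hq]]; exists p; split; auto; lia. }
  { exact H. }
  destruct (Hb B) as [y [Py [Ay Hy]]].
  destruct (HB (y n) (HLA y Py n) y Py) as [p [Hp Hq]].
  { intros i Hi; unfold upd. destruct (Nat.eqb_spec i n); subst; auto. apply Ay; lia. }
  apply (Hy p); auto.
Qed.

Definition chooseA (n : nat) (f : nat -> A) : A :=
  epsilon (inhabits a0) (fun a => bad (S n) (upd f n a)).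

Fixpoint fseq (n : nat) : nat -> A :=
  match n with
  | 0 => fun _ => a0
  | S n' => upd (fseq n') n' (chooseA n' (fseq n'))
  end.

Lemma fseq_bad n : bad 0 (fun _ => a0) -> bad n (fseq n).
Proof.
  intros H0; induction n; simpl; auto.
  unfold chooseA. apply (epsilon_spec (inhabits a0) (fun a => bad (S n) (upd (fseq n) n a))).
  apply bad_step; auto.
Qed.

Lemma fseq_stable n i : i < n -> fseq n i = fseq (S i) i.
Proof.
  induction n; intros Hi; [lia|].
  destruct (Nat.eq_dec i n) as [->|Hne]; auto.
  simpl fseq at 1. unfold upd at 1. destruct (Nat.eqb_spec i n); [lia|]. apply IHn; lia.
Qed.

Lemma compactness : exists B, forall y, P y -> exists p, p <= B /\ Q y p.
Proof.
  apply NNPP; intro Hn.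
  assert (H0 : bad 0 (fun _ => a0)).
  { intros B. apply NNPP; intro Hc. apply Hn; exists B; intros y Py.
    apply NNPP; intro Hd; apply Hc; exists y; repeat split; auto.
    - intros i Hi; lia.
    - intros p Hp Hq; apply Hd; eauto. }
  set (x := fun i => fseq (S i) i).
  assert (Hx : forall n, bad n x).
  { intros n. apply (bad_agree n (fseq n)); [|apply fseq_bad; auto].
    intros i Hi; unfold x; apply fseq_stable; auto. }
  destruct (classic (P x)) as [Px|nPx].
  - destruct (Hloc x Px) as [p [N [Hq Hl]]].
    destruct (Hx N p) as [y [Py [Ay Hy]]].
    apply (Hy p); auto.
  - destruct (Hclosed x nPx) as [N HN].
    destruct (Hx N 0) as [y [Py [Ay _]]].
    apply (HN y); auto.
Qed.
End Compact.


Lemma myZorn (T : Type) (P : (T -> Prop) -> Prop) :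
  (forall F : (T -> Prop) -> Prop, (forall X, F X -> P X) ->
     (forall X Y, F X -> F Y -> (forall t, X t -> Y t) \/ (forall t, Y t -> X t)) ->
     P (fun t => exists X, F X /\ X t)) ->
  exists A, P A /\ forall B, (forall t, A t -> B t) -> P B -> forall t, B t -> A t.
Proof.
intros H.
destruct (@classical_sets.Zorn_bigcup T P) as [A [PA HA]].
- intros F FP Ftot.
  assert (E : classical_sets.bigcup F (fun X => X) = (fun t => exists X, F X /\ X t)).
  { apply functional_extensionality; intro t; apply propositional_extensionality.
    unfold classical_sets.bigcup; simpl. split.
    - intros [X FX Xt]; eauto.
    - intros [X [FX Xt]]; econstructor; eauto. }
  rewrite E. apply H. exact FP. intros X Y FX FY. destruct (Ftot X Y FX FY) as [h|h]; [left|right]; intros t; apply h.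
- exists A; split; auto. intros B AB PB t Bt.
  apply NNPP; intro nA. apply (HA B); auto. split; auto.
Qed.

Definition emb (P : Prop) : bool := if excluded_middle_informative P then true else false.
Lemma emb_true (P : Prop) : emb P = true <-> P.
Proof. unfold emb; destruct (excluded_middle_informative P); intuition discriminate. Qed.
Lemma emb_false (P : Prop) : emb P = false <-> ~ P.
Proof. unfold emb; destruct (excluded_middle_informative P); intuition discriminate. Qed.

Section Card.
Variable K : Type.
Hypothesis Kinf : ~ exists l : list K, forall k, In k l.

Lemma K_inh : inhabited K.
Proof.
  apply NNPP; intro H; apply Kinf; exists []; intro k; apply H; constructor; exact k.
Qed.

Definition nextK (l : list K) : K := epsilon K_inh (fun k => ~ In k l).
Lemma nextK_spec l : ~ In (nextK l) l.
Proof.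
  apply (epsilon_spec K_inh (fun k => ~ In k l)).
  apply NNPP; intro H; apply Kinf; exists l; intro k; apply NNPP; intro Hk; apply H; eauto.
Qed.

Fixpoint nl (n : nat) : list K := match n with 0 => [] | S n => nl n ++ [nextK (nl n)] end.
Definition nu (n : nat) : K := nextK (nl n).

Lemma nu_in i n : i < n -> In (nu i) (nl n).
Proof.
  induction n; intros H; [lia|]. simpl. apply in_or_app.
  destruct (Nat.eq_dec i n) as [->|]; [right; left; reflexivity|left; apply IHn; lia].
Qed.

Lemma nu_inj i j : nu i = nu j -> i = j.
Proof.
  intros H. destruct (Nat.lt_trichotomy i j) as [Hl|[He|Hl]]; auto.
  - exfalso; apply (nextK_spec (nl j)); fold (nu j); rewrite <- H; apply nu_in; auto.
  - exfalso; apply (nextK_spec (nl i)); fold (nu i); rewrite H; apply nu_in; auto.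
Qed.

Definition T3 := (K * (K * K))%type.
Definition domG (G : T3 -> Prop) (x : K) := exists y, G (x, y).
Definition Good (G : T3 -> Prop) :=
  (forall x y y', G (x, y) -> G (x, y') -> y = y') /\
  (forall x y, G (x, y) -> domG G (fst y) /\ domG G (snd y)) /\
  (forall a b, domG G a -> domG G b -> exists x, G (x, (a, b))) /\
  (forall n, domG G (nu n)).
Definition P1 (G : T3 -> Prop) := (forall t, ~ G t) \/ Good G.

Definition G0 (t : T3) := exists n, t = (nu n, (nu (fst (of_nat n)), nu (snd (of_nat n)))).

Lemma domG0 k : domG G0 k <-> exists n, k = nu n.
Proof.
  split.
  - intros [y [n Hn]]. injection Hn; intros; eauto.
  - intros [n ->]. eexists; exists n; reflexivity.
Qed.

Lemma Good_G0 : Good G0.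
Proof.
  refine (conj _ (conj _ (conj _ _))).
  - intros x y y' [n Hn] [n' Hn']. injection Hn; injection Hn'; intros; subst.
    apply nu_inj in H2; subst. congruence.
  - intros x y [n Hn]; injection Hn; intros; subst; split; apply domG0; simpl; eexists; reflexivity.
  - intros a b Ha Hb. apply domG0 in Ha as [n1 ->]; apply domG0 in Hb as [n2 ->].
    exists (nu (to_nat (n1, n2))). exists (to_nat (n1, n2)). rewrite cancel_of_to. reflexivity.
  - intros n; apply domG0; eauto.
Qed.

Lemma P1_chain : forall F : (T3 -> Prop) -> Prop, (forall X, F X -> P1 X) ->
     (forall X Y, F X -> F Y -> (forall t, X t -> Y t) \/ (forall t, Y t -> X t)) ->
     P1 (fun t => exists X, F X /\ X t).
Proof.
  intros F FP Ftot.
  destruct (classic (exists t X, F X /\ X t)) as [[t0 [X0 [FX0 X0t]]]|Hno].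
  2:{ left; intros t Ht; apply Hno; eauto. }
  right.
  assert (HG : forall X t, F X -> X t -> Good X).
  { intros X t FX Xt; destruct (FP X FX) as [H|H]; auto; exfalso; exact (H t Xt). }
  refine (conj _ (conj _ (conj _ _))).
  - intros x y y' [X1 [F1 H1]] [X2 [F2 H2]].
    destruct (Ftot X1 X2 F1 F2) as [S|S].
    + destruct (HG X2 _ F2 H2) as [Hf _]; apply (Hf x); auto.
    + destruct (HG X1 _ F1 H1) as [Hf _]; apply (Hf x); auto.
  - intros x y [X [FX Xt]]. destruct (HG X _ FX Xt) as [_ [Hr _]].
    destruct (Hr x y Xt) as [[z Hz] [z' Hz']]. split; [exists z, X|exists z', X]; auto.
  - intros a b [ya [X1 [F1 H1]]] [yb [X2 [F2 H2]]].
    destruct (Ftot X1 X2 F1 F2) as [S|S].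
    + destruct (HG X2 _ F2 H2) as [_ [_ [Hs _]]].
      destruct (Hs a b) as [x Hx]; [exists ya; auto|exists yb; auto|]. exists x, X2; auto.
    + destruct (HG X1 _ F1 H1) as [_ [_ [Hs _]]].
      destruct (Hs a b) as [x Hx]; [exists ya; auto|exists yb; auto|]. exists x, X1; auto.
  - intros n. destruct (HG X0 _ FX0 X0t) as [_ [_ [_ Hn]]]. destruct (Hn n) as [y Hy].
    exists y, X0; auto.
Qed.

Lemma surjKK : exists h : K -> K * K, forall p, exists k, h k = p.
Proof.
  destruct (myZorn T3 P1 P1_chain) as [A [PA HA]].
  assert (GA : Good A).
  { destruct PA as [HE|HG]; auto. exfalso.
    assert (Hs : forall t, G0 t -> A t).
    { apply (HA G0); [intros t Ht; exfalso; exact (HE t Ht)| right; exact Good_G0]. }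
    apply (HE (nu 0, (nu (fst (of_nat 0)), nu (snd (of_nat 0))))), Hs. exists 0; reflexivity. }
  destruct GA as [Afun [Aran [Asurj Anu]]].
  set (Dm := domG A).
  pose (kk := nu 0).
  set (fA := fun x => epsilon (inhabits (kk, kk)) (fun y => A (x, y))).
  assert (HfA : forall x, Dm x -> A (x, fA x)).
  { intros x [y Hy]. apply (epsilon_spec (inhabits (kk,kk)) (fun y => A (x, y))); eauto. }
  assert (HfA2 : forall x y, A (x, y) -> fA x = y).
  { intros x y Hy. apply (Afun x); auto. apply HfA; exists y; auto. }
  assert (HfAD : forall x, Dm x -> Dm (fst (fA x)) /\ Dm (snd (fA x))).
  { intros x Hx; apply (Aran x), HfA; auto. }
  assert (HfAs : forall a b, Dm a -> Dm b -> exists x, Dm x /\ fA x = (a, b)).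
  { intros a b Ha Hb; destruct (Asurj a b Ha Hb) as [x Hx]. exists x; split; [exists (a,b); auto|auto]. }
  set (bsel := fun b => emb (b = nu 0)).
  assert (Hnu01 : nu 1 <> nu 0) by (intro H; apply nu_inj in H; discriminate).
  assert (Hbs0 : bsel (nu 0) = true) by (apply emb_true; reflexivity).
  assert (Hbs1 : bsel (nu 1) = false) by (apply emb_false; auto).
  set (P2 := fun (J : K * K -> Prop) =>
     (forall a r, J (a, r) -> Dm a /\ ~ Dm r) /\
     (forall a r r', J (a, r) -> J (a, r') -> r = r') /\
     (forall a a' r, J (a, r) -> J (a', r) -> a = a')).
  destruct (myZorn (K * K) P2) as [J [[Jdom [Jfun Jinj]] HJ]].
  { intros F FP Ftot. refine (conj _ (conj _ _)).
    - intros a r [X [FX Xt]]. apply (FP X FX) in Xt; tauto.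
    - intros a r r' [X1 [F1 H1]] [X2 [F2 H2]]. destruct (Ftot X1 X2 F1 F2) as [S|S].
      + apply (proj1 (proj2 (FP X2 F2)) a); auto.
      + apply (proj1 (proj2 (FP X1 F1)) a); auto.
    - intros a a' r [X1 [F1 H1]] [X2 [F2 H2]]. destruct (Ftot X1 X2 F1 F2) as [S|S].
      + apply (proj2 (proj2 (FP X2 F2)) a a' r); auto.
      + apply (proj2 (proj2 (FP X1 F1)) a a' r); auto. }
  set (fJ := fun a => epsilon (inhabits kk) (fun r => J (a, r))).
  assert (HfJ : forall a r, J (a, r) -> fJ a = r).
  { intros a r H. apply (Jfun a); auto.
    apply (epsilon_spec (inhabits kk) (fun r => J (a, r))); eauto. }
  assert (Hcases : (forall a, Dm a -> exists r, J (a, r)) \/ (forall r, ~ Dm r -> exists a, J (a, r))).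
  { apply NNPP; intro H. apply not_or_and in H as [H1 H2].
    apply not_all_ex_not in H1 as [a0 Ha0]. apply not_all_ex_not in H2 as [r0 Hr0].
    apply imply_to_and in Ha0 as [Da0 Ha0]. apply imply_to_and in Hr0 as [Dr0 Hr0].
    set (J' := fun t => J t \/ t = (a0, r0)).
    assert (HJ' : J (a0, r0)).
    { apply (HJ J'); [intros t Ht; left; auto| |right; reflexivity].
      refine (conj _ (conj _ _)).
      - intros a r [H|H]; [apply Jdom; auto| injection H; intros; subst; auto].
      - intros a r r' [H|H] [H'|H'].
        + apply (Jfun a); auto.
        + injection H'; intros; subst. exfalso; apply Ha0; eauto.
        + injection H; intros; subst. exfalso; apply Ha0; eauto.
        + injection H; injection H'; intros; subst; auto.
      - intros a a' r [H|H] [H'|H'].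
        + apply (Jinj a a' r); auto.
        + injection H'; intros; subst. exfalso; apply Hr0; eauto.
        + injection H; intros; subst. exfalso; apply Hr0; eauto.
        + injection H; injection H'; intros; subst; auto. }
    apply Ha0; eauto. }
  destruct Hcases as [Htot|Hcov].
  -
    exfalso.
    set (phi := fun x => if bsel (snd (fA x)) then fst (fA x) else fJ (fst (fA x))).
    set (Bs := fun r => exists a, J (a, r)).
    assert (Hphi : forall x, Dm x -> Dm (phi x) \/ Bs (phi x)).
    { intros x Hx. unfold phi. destruct (bsel (snd (fA x))).
      - left; apply HfAD; auto.
      - right. destruct (Htot (fst (fA x))) as [r Hr]; [apply HfAD; auto|].
        exists (fst (fA x)); rewrite (HfJ _ _ Hr); auto. }
    assert (Hphis : forall k, Dm k \/ Bs k -> exists x, Dm x /\ phi x = k).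
    { intros k [Hk|[a Ha]].
      - destruct (HfAs k (nu 0) Hk (Anu 0)) as [x [Hx Ex]]. exists x; split; auto.
        unfold phi; rewrite Ex; simpl; rewrite Hbs0; auto.
      - destruct (HfAs a (nu 1) (proj1 (Jdom _ _ Ha)) (Anu 1)) as [x [Hx Ex]]. exists x; split; auto.
        unfold phi; rewrite Ex; simpl; rewrite Hbs1; auto. }
    set (Phi := fun a => (phi (fst (fA a)), phi (snd (fA a)))).
    set (A' := fun t : T3 => A t \/ exists a, J (a, fst t) /\ snd t = Phi a).
    assert (HA' : forall t, A' t -> A t).
    { apply (HA A'); [intros t Ht; left; auto|]. right.
      assert (HdA' : forall k, domG A' k -> Dm k \/ Bs k).
      { intros k [y [Hy|[a [Ha _]]]]; [left; exists y; auto| right; exists a; auto]. }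
      assert (HdA'2 : forall k, Dm k \/ Bs k -> domG A' k).
      { intros k [[y Hy]|[a Ha]]; [exists y; left; auto| exists (Phi a); right; exists a; auto]. }
      refine (conj _ (conj _ (conj _ _))).
      - intros x y y' [H|[a [Ha Hy]]] [H'|[a' [Ha' Hy']]]; simpl in *.
        + apply (Afun x); auto.
        + exfalso; apply (proj2 (Jdom _ _ Ha')); exists y; auto.
        + exfalso; apply (proj2 (Jdom _ _ Ha)); exists y'; auto.
        + rewrite (Jinj a a' x Ha Ha') in Hy. congruence.
      - intros x y [H|[a [Ha Hy]]]; simpl in *; split; apply HdA'2.
        + left; apply (Aran x y H).
        + left; apply (Aran x y H).
        + subst y; simpl. apply Hphi. apply HfAD. apply (proj1 (Jdom _ _ Ha)).
        + subst y; simpl. apply Hphi. apply HfAD. apply (proj1 (Jdom _ _ Ha)).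
      - intros a b Ha Hb. apply HdA' in Ha; apply HdA' in Hb.
        destruct (Hphis a Ha) as [x1 [Hx1 E1]]. destruct (Hphis b Hb) as [x2 [Hx2 E2]].
        destruct (HfAs x1 x2 Hx1 Hx2) as [k [Hk Ek]].
        destruct (Htot k Hk) as [r Hr]. exists r. right. exists k; split; auto.
        simpl. unfold Phi. rewrite Ek; simpl; congruence.
      - intros n; destruct (Anu n) as [y Hy]; exists y; left; auto. }
    destruct (Htot (nu 0) (Anu 0)) as [r Hr].
    assert (Ar : A (r, Phi (nu 0))) by (apply HA'; right; exists (nu 0); auto).
    apply (proj2 (Jdom _ _ Hr)); exists (Phi (nu 0)); auto.
  -
    set (psi := fun x => if bsel (snd (fA x)) then fst (fA x) else
                  if emb (exists r, J (fst (fA x), r)) then fJ (fst (fA x)) else fst (fA x)).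
    assert (Hpsi : forall k, exists x, Dm x /\ psi x = k).
    { intros k. destruct (classic (Dm k)) as [Hk|Hk].
      - destruct (HfAs k (nu 0) Hk (Anu 0)) as [x [Hx Ex]]. exists x; split; auto.
        unfold psi; rewrite Ex; simpl; rewrite Hbs0; auto.
      - destruct (Hcov k Hk) as [a Ha].
        destruct (HfAs a (nu 1) (proj1 (Jdom _ _ Ha)) (Anu 1)) as [x [Hx Ex]]. exists x; split; auto.
        unfold psi; rewrite Ex; simpl; rewrite Hbs1.
        rewrite (proj2 (emb_true _) (ex_intro _ k Ha)). apply HfJ; auto. }
    exists (fun k => (psi (fst (fA k)), psi (snd (fA k)))).
    intros [k1 k2]. destruct (Hpsi k1) as [x1 [Hx1 E1]]. destruct (Hpsi k2) as [x2 [Hx2 E2]].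
    destruct (HfAs x1 x2 Hx1 Hx2) as [k [Hk Ek]]. exists k. rewrite Ek; simpl; congruence.
Qed.

Fixpoint decl (h : K -> K * K) (n : nat) (k : K) : list K :=
  match n with 0 => [] | S n => fst (h k) :: decl h n (snd (h k)) end.

Lemma list_surj : exists q : K -> list K, forall s, exists k, q k = s.
Proof.
  destruct surjKK as [h Hh].
  set (c := fun k => epsilon (inhabits 0) (fun n => nu n = k)).
  assert (Hc : forall n, c (nu n) = n).
  { intros n. apply nu_inj. apply (epsilon_spec (inhabits 0) (fun m => nu m = nu n)); eauto. }
  assert (Hd : forall s, exists k, decl h (length s) k = s).
  { induction s as [|a s IH]; simpl. { exists (nu 0); auto. }
    destruct IH as [k Hk]. destruct (Hh (a, k)) as [k' Hk']. exists k'. rewrite Hk'; simpl; congruence. }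
  exists (fun k => decl h (c (fst (h k))) (snd (h k))).
  intros s. destruct (Hd s) as [k Hk]. destruct (Hh (nu (length s), k)) as [k' Hk'].
  exists k'. rewrite Hk'; simpl. rewrite Hc; auto.
Qed.
End Card.



Definition combo (P N : list subset_omega) (p : nat) :=
  (forall a, In a P -> a p = true) /\ (forall a, In a N -> a p = false).

Definition Req (I : family) (x : subset_omega) :=
  forall P N, (forall a, In a P -> I a) -> (forall a, In a N -> I a) ->
  (forall a, In a P -> ~ In a N) -> forall (eps : bool) M,
  exists p, M <= p /\ combo P N p /\ x p = eps.

Definition neqb (x a : subset_omega) : bool :=
  if excluded_middle_informative (a = x) then false else true.

Lemma in_filter_neq x a l : In a (filter (neqb x) l) <-> In a l /\ a <> x.
Proof.
  rewrite filter_In; unfold neqb.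
  destruct (excluded_middle_informative (a = x)); intuition congruence.
Qed.

Lemma glue (I : family) x : maximal_independent I -> Req I x -> False.
Proof.
  intros [HI Hmax] HR.
  assert (Hind : independent (fun y => I y \/ y = x)).
  { intros A0 A1 H0 H1 Hd M.
    destruct (classic (In x A0)) as [x0|nx0].
    - destruct (HR (filter (neqb x) A0) A1) with (eps := true) (M := M) as [p [Hp [[Hc0 Hc1] Hxp]]].
      + intros a Ha; apply in_filter_neq in Ha as [Ha Hne]; destruct (H0 a Ha); congruence.
      + intros a Ha; destruct (H1 a Ha); auto. subst; exfalso; exact (Hd _ x0 Ha).
      + intros a Ha Hb; apply in_filter_neq in Ha as [Ha _]; exact (Hd _ Ha Hb).
      + exists p; repeat split; auto.
        intros a Ha; destruct (classic (a = x)) as [->|Hne]; auto.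
        apply Hc0, in_filter_neq; auto.
    - destruct (classic (In x A1)) as [x1|nx1].
      + destruct (HR A0 (filter (neqb x) A1)) with (eps := false) (M := M) as [p [Hp [[Hc0 Hc1] Hxp]]].
        * intros a Ha; destruct (H0 a Ha); auto; subst; contradiction.
        * intros a Ha; apply in_filter_neq in Ha as [Ha Hne]; destruct (H1 a Ha); congruence.
        * intros a Ha Hb; apply in_filter_neq in Hb as [Hb _]; exact (Hd _ Ha Hb).
        * exists p; repeat split; auto.
          intros a Ha; destruct (classic (a = x)) as [->|Hne]; auto.
          apply Hc1, in_filter_neq; auto.
      + apply HI; auto.
        * intros a Ha; destruct (H0 a Ha); auto; subst; contradiction.
        * intros a Ha; destruct (H1 a Ha); auto; subst; contradiction.
  }
  assert (Ix : I x) by (apply (Hmax _ (fun y Hy => or_introl Hy) Hind); auto).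
  destruct (HR [] [x]) with (eps := true) (M := 0) as [p [_ [[_ Hc] Hxp]]].
  - intros a [].
  - intros a [<-|[]]; auto.
  - intros a [].
  - rewrite (Hc x (or_introl eq_refl)) in Hxp; discriminate.
Qed.

Lemma filter_nil' {X} (f : X -> bool) l : (forall x, In x l -> f x = false) -> filter f l = [].
Proof. induction l as [|a l IH]; simpl; intros H; auto. rewrite H; auto. Qed.

Lemma least_ex (f : nat -> bool) : (exists n, f n = true) ->
  exists n, f n = true /\ forall k, k < n -> f k = false.
Proof.
  intros [n Hn]. induction n as [n IH] using (well_founded_induction lt_wf).
  destruct (classic (exists k, k < n /\ f k = true)) as [[k [Hk Hfk]]|Hno].
  - exact (IH k Hk Hfk).
  - exists n; split; auto. intros k Hk. destruct (f k) eqn:E; auto.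
    exfalso; apply Hno; eauto.
Qed.


Lemma I_infinite (I : family) : maximal_independent I ->
  forall l, exists a, I a /\ ~ In a l.
Proof.
  intros HM l. apply NNPP; intro Hn.
  assert (Hl : forall a, I a -> In a l).
  { intros a Ia; apply NNPP; intro Hna; apply Hn; eauto. }
  set (Sm := fun p q => forall a, In a l -> I a -> a p = a q).
  set (same := fun p q => emb (Sm p q)).
  set (cnt := fun p => length (filter (fun q => same q p) (seq 0 p))).
  set (x := fun p => Nat.odd (cnt p)).
  apply (glue I x HM).
  intros P N HP HN Hd eps M.
  destruct HM as [HI _].
  destruct (HI P N HP HN Hd M) as [p0 [Hp0 [Hc0 Hc1]]].
  set (lI := filter (fun a => emb (I a)) l).
  set (A0 := filter (fun a => a p0) lI).
  set (A1 := filter (fun a => negb (a p0)) lI).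
  assert (HA : bool_comb_infinite A0 A1).
  { apply HI.
    - intros a Ha; unfold A0, lI in Ha; rewrite !filter_In, emb_true in Ha; tauto.
    - intros a Ha; unfold A1, lI in Ha; rewrite !filter_In, emb_true in Ha; tauto.
    - intros a Ha Hb; unfold A0, A1 in *; rewrite filter_In in Ha, Hb.
      destruct Ha as [_ Ha]; destruct Hb as [_ Hb]; rewrite Ha in Hb; discriminate. }
  assert (HAt : forall q, combo A0 A1 q -> Sm q p0).
  { intros q [H0 H1] a Ha Ia.
    destruct (a p0) eqn:E.
    - apply H0; unfold A0, lI; rewrite !filter_In, emb_true; auto.
    - apply H1; unfold A1, lI; rewrite !filter_In, emb_true, E; auto. }
  assert (Htr : forall p q r, Sm p q -> Sm q r -> Sm p r).
  { intros p q r H1 H2 a Ha Ia; rewrite H1, H2; auto. }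
  assert (Hsy : forall p q, Sm p q -> Sm q p).
  { intros p q H1 a Ha Ia; rewrite H1; auto. }
  assert (Hcombo : forall q, Sm q p0 -> combo P N q).
  { intros q Hq; split.
    - intros a Ha; rewrite Hq; auto.
    - intros a Ha; rewrite Hq; auto. }
  destruct (least_ex (fun q => same q p0 && (M <=? q))) as [q1 [Hq1 Hq1m]].
  { destruct (HA M) as [q [Hq Hcq]]. exists q.
    apply Bool.andb_true_iff; split; [apply emb_true; auto| apply Nat.leb_le; auto]. }
  apply Bool.andb_true_iff in Hq1 as [Hq1 Hq1M]; apply (proj1 (emb_true (Sm q1 p0))) in Hq1; apply Nat.leb_le in Hq1M.
  destruct (least_ex (fun q => same q p0 && (S q1 <=? q))) as [q2 [Hq2 Hq2m]].
  { destruct (HA (S q1)) as [q [Hq Hcq]]. exists q.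
    apply Bool.andb_true_iff; split; [apply emb_true; auto| apply Nat.leb_le; auto]. }
  apply Bool.andb_true_iff in Hq2 as [Hq2 Hq2M]; apply (proj1 (emb_true (Sm q2 p0))) in Hq2; apply Nat.leb_le in Hq2M.
  assert (Hcnt : cnt q2 = S (cnt q1)).
  { unfold cnt.
    assert (Hs : seq 0 q2 = seq 0 q1 ++ q1 :: seq (S q1) (q2 - S q1)).
    { replace q2 with (q1 + (S (q2 - S q1))) at 1 by lia. rewrite seq_app. reflexivity. }
    rewrite Hs, filter_app. simpl.
    assert (H12 : Sm q1 q2) by exact (Htr _ _ _ Hq1 (Hsy _ _ Hq2)).
    assert (E1 : filter (fun q => same q q2) (seq 0 q1) = filter (fun q => same q q1) (seq 0 q1)).
    { apply filter_ext; intro q. unfold same.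
      destruct (classic (Sm q q1)) as [H|H].
      - rewrite (proj2 (emb_true _) H). apply emb_true. exact (Htr _ _ _ H H12).
      - destruct (emb (Sm q q1)) eqn:E; [apply (proj1 (emb_true _)) in E; contradiction|].
        destruct (emb (Sm q q2)) eqn:E2; auto. apply (proj1 (emb_true _)) in E2.
        exfalso; apply H. exact (Htr _ _ _ E2 (Hsy _ _ H12)). }
    assert (E2 : same q1 q2 = true).
    { apply emb_true. exact H12. }
    assert (E3 : filter (fun q => same q q2) (seq (S q1) (q2 - S q1)) = []).
    { apply filter_nil'. intros q Hq. apply in_seq in Hq.
      destruct (same q q2) eqn:E; auto. apply (proj1 (emb_true _)) in E.
      specialize (Hq2m q ltac:(lia)).
      assert (same q p0 = true) by (apply emb_true; exact (Htr _ _ _ E Hq2)).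
      rewrite H, Bool.andb_true_l in Hq2m. apply Nat.leb_gt in Hq2m. lia. }
    rewrite E1, E2, E3, length_app. simpl. lia. }
  destruct (Bool.eqb (x q1) eps) eqn:Eq.
  - apply Bool.eqb_prop in Eq. exists q1; repeat split; auto; apply Hcombo; auto.
  - exists q2; split; [lia|split].
    + apply Hcombo; auto.
    + change (Nat.odd (cnt q2) = eps). change (Bool.eqb (Nat.odd (cnt q1)) eps = false) in Eq.
      rewrite Hcnt, Nat.odd_succ, <- Nat.negb_odd.
      destruct (Nat.odd (cnt q1)), eps; simpl in *; auto; discriminate.
Qed.

Section ConvSeq.
Variable I : family.
Hypothesis Iinf : forall l, exists a, I a /\ ~ In a l.

Definition Inf (n : nat) (f : subset_omega) :=
  forall l, exists a, I a /\ agree n a f /\ ~ In a l.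

Lemma Inf_agree n f f' : agree n f f' -> Inf n f -> Inf n f'.
Proof.
  intros Hf H l; destruct (H l) as [a [Ia [Ha Hl]]]; exists a; repeat split; auto.
  eapply agree_trans; eauto.
Qed.

Lemma Inf_step n f : Inf n f -> exists b, Inf (S n) (upd f n b).
Proof.
  intros H. apply NNPP; intro Hn.
  assert (H1 : ~ Inf (S n) (upd f n true)) by (intro; apply Hn; eauto).
  assert (H2 : ~ Inf (S n) (upd f n false)) by (intro; apply Hn; eauto).
  apply not_all_ex_not in H1 as [l1 Hl1]. apply not_all_ex_not in H2 as [l2 Hl2].
  destruct (H (l1 ++ l2)) as [a [Ia [Ha Hl]]].
  assert (Hag : forall b, a n = b -> agree (S n) a (upd f n b)).
  { intros b Hb i Hi; unfold upd; destruct (Nat.eqb_spec i n); subst; auto. apply Ha; lia. }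
  destruct (a n) eqn:E.
  - apply Hl1; exists a; repeat split; auto. intro; apply Hl, in_or_app; auto.
  - apply Hl2; exists a; repeat split; auto. intro; apply Hl, in_or_app; auto.
Qed.

Fixpoint zf (n : nat) : subset_omega :=
  match n with
  | 0 => fun _ => false
  | S n' => upd (zf n') n' (epsilon (inhabits true) (fun b => Inf (S n') (upd (zf n') n' b)))
  end.

Lemma zf_Inf n : Inf n (zf n).
Proof.
  induction n; simpl.
  - intros l; destruct (Iinf l) as [a [Ia Hl]]; exists a; repeat split; auto; intros i Hi; lia.
  - apply (epsilon_spec (inhabits true) (fun b => Inf (S n) (upd (zf n) n b))).
    apply Inf_step; auto.
Qed.

Lemma zf_stable n i : i < n -> zf n i = zf (S i) i.
Proof.
  induction n; intros Hi; [lia|].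
  destruct (Nat.eq_dec i n) as [->|Hne]; auto.
  simpl zf at 1. unfold upd at 1. destruct (Nat.eqb_spec i n); [lia|]. apply IHn; lia.
Qed.

Definition zlim : subset_omega := fun i => zf (S i) i.

Lemma zlim_Inf n : Inf n zlim.
Proof.
  apply (Inf_agree n (zf n)); [|apply zf_Inf].
  intros i Hi; unfold zlim; apply zf_stable; auto.
Qed.

Definition splitP (n : nat) := exists a, I a /\ agree n a zlim /\ a n <> zlim n.

Lemma split_unb N : exists n, N < n /\ splitP n.
Proof.
  destruct (zlim_Inf (S N) []) as [a1 [I1 [A1 _]]].
  destruct (zlim_Inf (S N) [a1]) as [a2 [I2 [A2 N2]]].
  assert (Hex : exists a, I a /\ agree (S N) a zlim /\ a <> zlim).
  { destruct (classic (a1 = zlim)) as [E|E].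
    - exists a2; repeat split; auto. intro E2; apply N2; left; congruence.
    - exists a1; auto. }
  destruct Hex as [a [Ia [Aa Na]]].
  assert (Hd : exists i, negb (Bool.eqb (a i) (zlim i)) = true).
  { apply NNPP; intro H; apply Na; apply functional_extensionality; intro i.
    destruct (Bool.eqb (a i) (zlim i)) eqn:E; [apply Bool.eqb_prop; auto|].
    exfalso; apply H; exists i; rewrite E; auto. }
  destruct (least_ex _ Hd) as [n [Hn Hmin]].
  assert (Hn' : a n <> zlim n).
  { intro E; rewrite E, Bool.eqb_reflx in Hn; discriminate. }
  exists n; split.
  - destruct (Nat.lt_ge_cases N n); auto. exfalso; apply Hn'; apply Aa; lia.
  - exists a; repeat split; auto. intros i Hi. specialize (Hmin i Hi).
    destruct (Bool.eqb (a i) (zlim i)) eqn:E; [apply Bool.eqb_prop; auto|discriminate].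
Qed.

Definition nxt (t : nat) : nat := epsilon (inhabits 0) (fun n => t < n /\ splitP n).
Lemma nxt_spec t : t < nxt t /\ splitP (nxt t).
Proof. apply (epsilon_spec (inhabits 0) (fun n => t < n /\ splitP n)); apply split_unb. Qed.

Fixpoint eseq (j : nat) : nat := match j with 0 => nxt 0 | S j => nxt (eseq j) end.
Definition Aseq (j : nat) : subset_omega :=
  epsilon (inhabits zlim) (fun a => I a /\ agree (eseq j) a zlim /\ a (eseq j) <> zlim (eseq j)).

Lemma conv_seq_spec :
  (forall j, I (Aseq j)) /\ (forall j, agree (eseq j) (Aseq j) zlim) /\
  (forall j, Aseq j (eseq j) <> zlim (eseq j)) /\ (forall j, eseq j < eseq (S j)).
Proof.
  assert (H : forall j, I (Aseq j) /\ agree (eseq j) (Aseq j) zlim /\ Aseq j (eseq j) <> zlim (eseq j)).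
  { intros j. unfold Aseq.
    apply (epsilon_spec (inhabits zlim) (fun a => I a /\ agree (eseq j) a zlim /\ a (eseq j) <> zlim (eseq j))).
    destruct j; simpl; apply nxt_spec. }
  repeat split; try apply H. intros j; simpl; apply nxt_spec.
Qed.
End ConvSeq.

Definition closed_gen {X} (P : (nat -> X) -> Prop) :=
  forall y, ~ P y -> exists N, forall y', agree N y' y -> ~ P y'.

Lemma closed_or {X} (P Q : (nat -> X) -> Prop) : closed_gen P -> closed_gen Q -> closed_gen (fun y => P y \/ Q y).
Proof.
  intros HP HQ y Hy. destruct (HP y) as [N1 H1]; [tauto|]. destruct (HQ y) as [N2 H2]; [tauto|].
  exists (N1 + N2); intros y' Ha [H|H]; [apply (H1 y')|apply (H2 y')]; auto;
    apply (agree_mono (N1 + N2)); auto; lia.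
Qed.

Lemma closed_and {X} (P Q : (nat -> X) -> Prop) : closed_gen P -> closed_gen Q -> closed_gen (fun y => P y /\ Q y).
Proof.
  intros HP HQ y Hy. destruct (classic (P y)) as [Py|nPy].
  - destruct (HQ y) as [N2 H2]; [tauto|]. exists N2; intros y' Ha [_ H]; apply (H2 y'); auto.
  - destruct (HP y nPy) as [N1 H1]. exists N1; intros y' Ha [H _]; apply (H1 y'); auto.
Qed.

Lemma diff_ex (a b : subset_omega) : a <> b -> exists i, a i <> b i.
Proof.
  intros H; apply NNPP; intro Hn; apply H; apply functional_extensionality; intro i.
  apply NNPP; intro Hi; apply Hn; eauto.
Qed.

Lemma nagree_mono {X} n m (a b : nat -> X) : n <= m -> ~ agree n a b -> ~ agree m a b.
Proof. intros Hnm H Ha; apply H; eapply agree_mono; eauto. Qed.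

Lemma diff_nagree (a b : subset_omega) : a <> b -> exists N, ~ agree N a b.
Proof. intros H; destruct (diff_ex a b H) as [i Hi]; exists (S i); intro Ha; apply Hi, Ha; lia. Qed.

Fixpoint bl (r : nat) : list (list bool) :=
  match r with 0 => [[]] | S r => map (cons true) (bl r) ++ map (cons false) (bl r) end.

Lemma bl_complete l : In l (bl (length l)).
Proof.
  induction l as [|b l IH]; simpl; auto. apply in_or_app.
  destruct b; [left|right]; apply in_map; auto.
Qed.

Lemma app_inv_len {X} (l1 l1' l2 l2' : list X) : length l1 = length l1' ->
  l1 ++ l2 = l1' ++ l2' -> l1 = l1' /\ l2 = l2'.
Proof.
  revert l1'; induction l1 as [|a l1 IH]; intros [|a' l1'] Hl He; simpl in *; try discriminate; auto.
  injection He; intros He' ->. destruct (IH l1') as [-> ->]; auto.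
Qed.

Lemma map_const_in {X Y} (f : X -> Y) c l : map f l = map (fun _ => c) l -> forall a, In a l -> f a = c.
Proof.
  induction l as [|b l IH]; simpl; intros H a Ha; [contradiction|].
  injection H; intros H1 H2. destruct Ha as [<-|Ha]; auto.
Qed.

Lemma len2 {X} (l : list X) a b : length (l ++ [a; b]) = length l + 2.
Proof. rewrite length_app; reflexivity. Qed.

Section Main.
Variable K : Type.
Variable C : K -> subset_omega -> Prop.
Hypothesis HC : forall k, closed_cantor (C k).
Definition Iu : family := fun x => exists k, C k x.
Hypothesis HM : maximal_independent Iu.
Variables (z : subset_omega) (e : nat -> nat) (A : nat -> subset_omega).
Hypothesis HAI : forall j, Iu (A j).
Hypothesis HAag : forall j, agree (e j) (A j) z.
Hypothesis HAne : forall j, A j (e j) <> z (e j).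
Hypothesis Heinc : forall j, e j < e (S j).

Lemma e_mono i j : i < j -> e i < e j.
Proof. intros H; induction H; [apply Heinc|]. specialize (Heinc m); lia. Qed.
Lemma e_ge j : j <= e j.
Proof. induction j; [lia|]. specialize (Heinc j); lia. Qed.

Definition Cs (s : list K) (a : subset_omega) := exists k, In k s /\ C k a.
Definition Dz (a : subset_omega) := a = z \/ exists j, a = A j.
Definition Chat (s : list K) (m : nat) (a : subset_omega) := (Cs s a \/ Dz a) /\ (Iu z \/ ~ agree m a z).

Lemma Cs_closed s : closed_gen (Cs s).
Proof.
  intros y Hy.
  destruct (list_bound s (fun k N => forall y', agree N y' y -> ~ C k y')) as [N HN].
  { intros k B B' HB H y' Ha; apply H; eapply agree_mono; eauto. }
  { intros k Hk. destruct (HC k y) as [N HN]. { intro; apply Hy; exists k; auto. } exists N; exact HN. }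
  exists N; intros y' Ha [k [Hk Ck]]. exact (HN k Hk y' Ha Ck).
Qed.

Lemma Dz_closed : closed_gen Dz.
Proof.
  intros y Hy.
  assert (Hyz : y <> z) by (intro; apply Hy; left; auto).
  destruct (diff_ex y z Hyz) as [d Hd].
  destruct (nat_bound (S d) (fun j N => forall y', agree N y' y -> y' <> A j)) as [N HN].
  { intros j B B' HB H y' Ha; apply H; eapply agree_mono; eauto. }
  { intros j Hj. assert (Hne : y <> A j) by (intro; apply Hy; right; eauto).
    destruct (diff_ex y (A j) Hne) as [i Hi]. exists (S i); intros y' Ha E. subst y'.
    apply Hi; symmetry; apply Ha; lia. }
  exists (S d + N). intros y' Ha [E|[j E]].
  - subst y'. apply Hd. symmetry. apply Ha. lia.
  - destruct (Nat.lt_ge_cases j (S d)) as [Hj|Hj].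
    + apply (HN j Hj y'); auto. apply (agree_mono (S d + N)); auto; lia.
    + subst y'. apply Hd. rewrite <- (Ha d) by lia. apply HAag.
      pose proof (e_ge j); lia.
Qed.

Lemma Chat_closed s m : closed_gen (Chat s m).
Proof.
  apply closed_and; [apply closed_or; [apply Cs_closed|apply Dz_closed]|].
  intros y Hy. exists m. intros y' Ha [H|H]; apply Hy; auto.
  right; intro Ha'; apply H; intros i Hi; rewrite Ha by auto; apply Ha'; auto.
Qed.

Lemma Chat_I s m a : Chat s m a -> Iu a.
Proof.
  intros [[[k [_ Hk]]|[->|[j ->]]] H2]; [exists k; auto| |apply HAI].
  destruct H2 as [H2|H2]; auto. exfalso; apply H2; intros i Hi; auto.
Qed.

Definition comp (q : nat) (y : nat -> list bool) : subset_omega := fun i => nth q (y i) false.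

Definition Tup (s : list K) (m r : nat) (y : nat -> list bool) :=
  (forall i, length (y i) = r) /\ (forall q, q < r -> Chat s m (comp q y)) /\
  (forall q q', q < r -> q' < r -> q <> q' -> ~ agree m (comp q y) (comp q' y)).

Lemma comp_agree N q (y y' : nat -> list bool) : agree N y' y -> agree N (comp q y') (comp q y).
Proof. intros H i Hi; unfold comp; rewrite H; auto. Qed.

Lemma Tup_closed s m r : closed_gen (Tup s m r).
Proof.
  intros y Hy.
  destruct (classic (exists i, length (y i) <> r)) as [[i Hi]|H1].
  { exists (S i); intros y' Ha [Hl _]; apply Hi; rewrite <- (Ha i) by lia; auto. }
  destruct (classic (exists q, q < r /\ ~ Chat s m (comp q y))) as [[q [Hq Hc]]|H2].
  { destruct (Chat_closed s m _ Hc) as [N HN]. exists N; intros y' Ha [_ [Hc' _]].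
    apply (HN (comp q y')); [apply comp_agree; auto|apply Hc'; auto]. }
  exists m. intros y' Ha Ht. apply Hy. split; [|split].
  - intros i; apply NNPP; intro; apply H1; eauto.
  - intros q Hq; apply NNPP; intro; apply H2; eauto.
  - intros q q' Hq Hq' Hne Hag. destruct Ht as [_ [_ Hs]]. apply (Hs q q' Hq Hq' Hne).
    intros i Hi. rewrite (comp_agree m q y y' Ha i Hi), (comp_agree m q' y y' Ha i Hi). apply Hag; auto.
Qed.

Lemma Tup_witness s m r sg y : length sg = r -> Tup s m r y -> exists p, m <= p /\ y p = sg.
Proof.
  intros Hl [Hlen [Hch Hsep]].
  set (A0 := map (fun q => comp q y) (filter (fun q => nth q sg false) (seq 0 r))).
  set (A1 := map (fun q => comp q y) (filter (fun q => negb (nth q sg false)) (seq 0 r))).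
  destruct HM as [HI _].
  destruct (HI A0 A1) with (N := m) as [p [Hp [H0 H1]]].
  - intros a Ha; unfold A0 in Ha; apply in_map_iff in Ha as [q [<- Hq]].
    apply filter_In in Hq as [Hq _]; apply in_seq in Hq. apply (Chat_I s m), Hch; lia.
  - intros a Ha; unfold A1 in Ha; apply in_map_iff in Ha as [q [<- Hq]].
    apply filter_In in Hq as [Hq _]; apply in_seq in Hq. apply (Chat_I s m), Hch; lia.
  - intros a Ha Hb; unfold A0, A1 in *. apply in_map_iff in Ha as [q [<- Hq]].
    apply in_map_iff in Hb as [q' [E Hq']].
    apply filter_In in Hq as [Hq Sq]; apply in_seq in Hq.
    apply filter_In in Hq' as [Hq' Sq']; apply in_seq in Hq'.
    assert (q' <> q) by (intro; subst; rewrite Sq in Sq'; discriminate).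
    apply (Hsep q' q); try lia; auto. rewrite E. intros i Hi; auto.
  - exists p; split; auto. apply nth_ext with (d := false) (d' := false); [rewrite Hlen; auto|].
    intros q Hq. rewrite Hlen in Hq. change (comp q y p = nth q sg false).
    destruct (nth q sg false) eqn:E.
    + apply (H0 (comp q y)). unfold A0. apply (in_map (fun q0 => comp q0 y)). apply filter_In; split; auto. apply in_seq; lia.
    + apply (H1 (comp q y)). unfold A1. apply (in_map (fun q0 => comp q0 y)). apply filter_In; split; [apply in_seq; lia|rewrite E; auto].
Qed.

Definition Fprop (s : list K) (m B : nat) :=
  forall r sg y, r <= m -> length sg = r -> Tup s m r y -> exists p, p <= B /\ m <= p /\ y p = sg.

Lemma Fexists s m : exists B, Fprop s m B.
Proof.
  destruct (nat_bound (S m) (fun r B => forall sg y, length sg = r -> Tup s m r y -> exists p, p <= B /\ m <= p /\ y p = sg)) as [B HB].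
  { intros r B B' HBB H sg y Hl Ht. destruct (H sg y Hl Ht) as [p [Hp Hq]]. exists p; split; auto; lia. }
  { intros r Hr.
    destruct (list_bound (bl r) (fun sg B => length sg = r -> forall y, Tup s m r y -> exists p, p <= B /\ m <= p /\ y p = sg)) as [B HB].
    { intros sg B B' HBB H Hl y Ht. destruct (H Hl y Ht) as [p [Hp Hq]]. exists p; split; auto; lia. }
    { intros sg _.
      destruct (classic (length sg = r)) as [Hl|Hl]; [|exists 0; intros; contradiction].
      destruct (compactness (list bool) [] (bl r) (Tup s m r) (fun y p => m <= p /\ y p = sg)) as [B HB].
      - intros y [Hlen _] i. rewrite <- (Hlen i). apply bl_complete.
      - apply Tup_closed.
      - intros y Hy. destruct (Tup_witness s m r sg y Hl Hy) as [p [Hp Hyp]].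
        exists p, (S p); split; auto. intros y' _ Ha; split; auto. rewrite Ha; auto.
      - exists B; intros _ y Hy. destruct (HB y Hy) as [p [Hp [Hmp Hyp]]]. exists p; auto. }
    exists B. intros sg y Hl Ht. apply HB; auto. rewrite <- Hl; apply bl_complete. }
  exists B. intros r sg y Hr Hl Ht. apply (HB r); auto; lia.
Qed.

Definition F (s : list K) (m : nat) : nat := epsilon (inhabits 0) (Fprop s m).
Lemma F_spec s m : Fprop s m (F s m).
Proof. apply (epsilon_spec (inhabits 0) (Fprop s m)), Fexists. Qed.


Section Window.
Variable g : nat -> nat.
Fixpoint Gm (m : nat) : nat := match m with 0 => g 0 | S m' => Nat.max (Gm m') (g (S m')) end.
Lemma Gm_ge m : g m <= Gm m.
Proof. destruct m; simpl; lia. Qed.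
Lemma Gm_mono m m' : m <= m' -> Gm m <= Gm m'.
Proof. induction 1; simpl; lia. Qed.

Fixpoint w (j : nat) : nat :=
  match j with 0 => S (e 1) | S j' => Gm (w j') + w j' + e (S (S j')) + 1 end.
Lemma w_step j : w j < w (S j).
Proof. simpl; lia. Qed.
Lemma w_mono i j : i < j -> w i < w j.
Proof. induction 1; [apply w_step|]. pose proof (w_step m); lia. Qed.
Lemma w_e j : e (S j) < w j.
Proof. destruct j; simpl; lia. Qed.
Lemma w_G j : Gm (w j) < w (S j).
Proof. simpl; lia. Qed.
Lemma w_ge j : j <= w j.
Proof. induction j; [lia|]. pose proof (w_step j); lia. Qed.

Lemma win n : w 0 <= n -> exists j, w j <= n < w (S j).
Proof.
  intros H.
  destruct (least_ex (fun j => n <? w (S j))) as [j [Hj Hmin]].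
  { exists n. apply Nat.ltb_lt. pose proof (w_ge (S n)); lia. }
  apply Nat.ltb_lt in Hj. exists j; split; auto.
  destruct j; auto. specialize (Hmin j ltac:(lia)). apply Nat.ltb_ge in Hmin; auto.
Qed.

Fixpoint Jaux (p n : nat) : nat :=
  match n with 0 => 0 | S n' => if w n <=? p then n else Jaux p n' end.
Definition Jw (p : nat) := Jaux p p.

Lemma Jaux_spec j p n : w j <= p < w (S j) -> j <= n -> Jaux p n = j.
Proof.
  intros [H1 H2]. induction n; intros Hj.
  - simpl; lia.
  - change (Jaux p (S n)) with (if w (S n) <=? p then S n else Jaux p n).
    destruct (Nat.leb_spec (w (S n)) p) as [Hw|Hw].
    + destruct (Nat.lt_ge_cases j (S n)) as [Hl|Hl]; [|lia].
      assert (S j <= S n) by lia. destruct (Nat.eq_dec (S j) (S n)) as [E|E].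
      * rewrite E in H2; lia.
      * pose proof (w_mono (S j) (S n) ltac:(lia)); lia.
    + apply IHn. destruct (Nat.eq_dec j (S n)) as [->|]; lia.
Qed.

Lemma Jw_spec j p : w j <= p < w (S j) -> Jw p = j.
Proof. intros H; apply Jaux_spec; auto. pose proof (w_ge j); lia. Qed.

Definition xg (p : nat) : bool := if w 0 <=? p then A (Jw p) p else false.

Lemma xg_val j p : w j <= p < w (S j) -> xg p = A j p.
Proof.
  intros H. unfold xg. pose proof (w_mono 0 j). destruct (Nat.leb_spec (w 0) p).
  - rewrite (Jw_spec j p H); auto.
  - destruct j; [lia|]. specialize (H0 ltac:(lia)); lia.
Qed.
End Window.

Definition deq (a b : subset_omega) : {a = b} + {a <> b} := excluded_middle_informative (a = b).

Lemma elements_list (l : list subset_omega) : (forall a, In a l -> Iu a) ->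
  exists s, forall a, In a l -> Cs s a.
Proof.
  induction l as [|a l IH]; intros H.
  - exists []; intros a [].
  - destruct (H a (or_introl eq_refl)) as [k Hk]. destruct IH as [s Hs]. { intros b Hb; apply H; right; auto. }
    exists (k :: s). intros b [<-|Hb]; [exists k; split; [left|]; auto|].
    destruct (Hs b Hb) as [k' [Hk' Ck']]; exists k'; split; [right|]; auto.
Qed.

Lemma main_contra (g : nat -> nat) :
  (forall s, exists s', (forall k, In k s -> In k s') /\ ~ eventually_dominated g (F s')) -> False.
Proof.
  intros Hg. apply (glue Iu (xg g) HM).
  intros P N HP HN Hd eps M.
  set (P0 := nodup deq P). set (N0 := nodup deq N).
  set (L0 := P0 ++ N0).
  assert (HL0 : forall a, In a L0 -> Iu a).
  { intros a Ha; apply in_app_or in Ha as [Ha|Ha]; apply nodup_In in Ha; auto. }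
  assert (NL0 : NoDup L0).
  { apply NoDup_app; try apply NoDup_nodup. intros a Ha Hb; apply nodup_In in Ha; apply nodup_In in Hb.
    exact (Hd a Ha Hb). }
  destruct (elements_list L0 HL0) as [s Hs].
  destruct (Hg s) as [s' [Hss' Hbeat]].
  destruct (list_bound L0 (fun a N => forall b, In b L0 -> a <> b -> ~ agree N a b)) as [Nc HNc].
  { intros a B B' HB H b Hb Hne; apply (nagree_mono B); auto. }
  { intros a Ha. apply (list_bound L0 (fun b N => a <> b -> ~ agree N a b)).
    - intros b B B' HB H Hne; apply (nagree_mono B); auto.
    - intros b Hb. destruct (classic (a = b)) as [E|E]; [exists 0; tauto|].
      destruct (diff_nagree a b E) as [N1 HN1]; exists N1; auto. }
  destruct (list_bound L0 (fun a B => forall j, B <= j -> forall m, B <= m -> e j < m -> ~ agree m a (A j))) as [Nb HNb].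
  { intros a B B' HB H j Hj m Hm Hem; apply H; lia. }
  { intros a _. destruct (classic (a = z)) as [->|Hne].
    - exists 0; intros j _ m _ Hem Ha. apply (HAne j). symmetry; apply Ha; auto.
    - destruct (diff_ex a z Hne) as [d Hdd]. exists (S d); intros j Hj m Hm Hem Ha.
      apply Hdd. rewrite (Ha d) by lia. apply HAag. pose proof (e_ge j); lia. }
  destruct (list_bound L0 (fun a N => Iu z \/ ~ agree N a z)) as [Nd HNd].
  { intros a B B' HB [H|H]; [left; auto|right; apply (nagree_mono B); auto]. }
  { intros a Ha. destruct (classic (Iu z)) as [H|H]; [exists 0; left; auto|].
    assert (a <> z) by (intro; subst; apply H; apply HL0; auto).
    destruct (diff_nagree a z H0) as [N1 HN1]; exists N1; right; auto. }
  set (r := length L0 + 2).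
  set (T := M + Nc + Nb + Nd + r + w g Nb).
  assert (Hn : exists n, T <= n /\ F s' n < g n).
  { apply NNPP; intro Hno. apply Hbeat. exists T. intros n Hn.
    apply NNPP; intro Hgt. apply Hno; exists n; split; auto; lia. }
  destruct Hn as [n [HTn Hgn]].
  destruct (win g n) as [j [Hj1 Hj2]]. { pose proof (w_mono g 0 Nb); destruct Nb; lia. }
  assert (HjNb : Nb <= j).
  { destruct (Nat.lt_ge_cases j Nb) as [Hl|]; auto. pose proof (w_mono g (S j) Nb); destruct (Nat.eq_dec (S j) Nb); subst; lia. }
  pose proof (w_e g j) as Hwe. pose proof (Heinc j) as Hej.
  set (T' := L0 ++ [A j; A (S j)]).
  assert (HAA : ~ agree n (A j) (A (S j))).
  { intros Ha. apply (HAne j). rewrite (Ha (e j)) by lia. apply HAag; lia. }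
  assert (HLA : forall a k, In a L0 -> (k = j \/ k = S j) -> ~ agree n a (A k)).
  { intros a k Ha Hk. apply (HNb a Ha k); try lia. destruct Hk; subst; lia. }
  assert (HsepT : forall a b, In a T' -> In b T' -> a <> b -> ~ agree n a b).
  { intros a b Ha Hb Hne. unfold T' in Ha, Hb. apply in_app_or in Ha; apply in_app_or in Hb.
    destruct Ha as [Ha|[<-|[<-|[]]]]; destruct Hb as [Hb|[<-|[<-|[]]]].
    - apply (nagree_mono Nc); [lia|]. apply HNc; auto.
    - apply (HLA a j); auto.
    - apply (HLA a (S j)); auto.
    - intro Hag; apply (HLA b j Hb); auto; apply agree_sym; auto.
    - contradiction.
    - exact HAA.
    - intro Hag; apply (HLA b (S j) Hb); auto; apply agree_sym; auto.
    - intro Hag; apply HAA; apply agree_sym; auto.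
    - contradiction. }
  assert (NT' : NoDup T').
  { apply NoDup_app; auto.
    - constructor; [|constructor; [intros []|constructor]].
      intros [E|[]]. apply HAA. rewrite E. intros i _; auto.
    - intros a Ha [E|[E|[]]]; subst a.
      + apply (HLA (A j) j Ha); auto. intros i _; auto.
      + apply (HLA (A (S j)) (S j) Ha); auto. intros i _; auto. }
  assert (HchT : forall a, In a T' -> Chat s' n a).
  { intros a Ha. unfold T' in Ha. apply in_app_or in Ha. destruct Ha as [Ha|[<-|[<-|[]]]].
    - split.
      + left. destruct (Hs a Ha) as [k [Hk Ck]]. exists k; auto.
      + destruct (HNd a Ha) as [H|H]; [left; auto|right; apply (nagree_mono Nd); auto; lia].
    - split; [right; right; eauto|right]. intro Hag. apply (HAne j). apply Hag; lia.
    - split; [right; right; eauto|right]. intro Hag. apply (HAne (S j)). apply Hag; lia. }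
  set (y := fun i => map (fun a : subset_omega => a i) T').
  assert (Hlen : length T' = r).
  { unfold T', r. apply len2. }
  assert (Hcomp : forall q, comp q y = nth q T' (fun _ => false)).
  { intros q; apply functional_extensionality; intro i. unfold comp, y.
    change false with ((fun a : subset_omega => a i) (fun _ => false)) at 1. apply map_nth. }
  assert (HTup : Tup s' n r y).
  { split; [|split].
    - intros i; unfold y; rewrite length_map; auto.
    - intros q Hq. rewrite Hcomp. apply HchT, nth_In; lia.
    - intros q q' Hq Hq' Hne. rewrite !Hcomp. apply HsepT; try (apply nth_In; lia).
      intro E. apply Hne. apply (proj1 (NoDup_nth T' (fun _ => false)) NT'); auto; lia. }
  set (sg := map (fun _ => true) P0 ++ map (fun _ => false) N0 ++ [eps; eps]).
  assert (Hsg : length sg = r) by (unfold sg, r, L0; rewrite !length_app, !length_map; simpl; try rewrite length_app; lia).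
  destruct (F_spec s' n r sg y) as [p [Hp1 [Hp2 Hp3]]]; auto; [unfold T in HTn; lia|].
  unfold y, sg, T', L0 in Hp3. rewrite !map_app, <- app_assoc in Hp3.
  apply app_inv_len in Hp3 as [HP0 Hp3]; [|rewrite !length_map; auto].
  apply app_inv_len in Hp3 as [HN0 Hp3]; [|rewrite !length_map; auto].
  simpl in Hp3. injection Hp3; intros Hej1 Hej0.
  exists p; split; [unfold T in HTn; lia|split; [split|]].
  - intros a Ha. apply (map_const_in (fun a => a p) true P0); auto. apply nodup_In; auto.
  - intros a Ha. apply (map_const_in (fun a => a p) false N0); auto. apply nodup_In; auto.
  - assert (Hpg : p < w g (S (S j))).
    { pose proof (Gm_ge g n). pose proof (Gm_mono g n (w g (S j)) ltac:(lia)). pose proof (w_G g (S j)). lia. }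
    destruct (Nat.lt_ge_cases p (w g (S j))) as [Hpl|Hpl].
    + rewrite (xg_val g j p); auto; lia.
    + rewrite (xg_val g (S j) p); auto.
Qed.

End Main.

Theorem theorem1p4 :
  forall (K : Type) (C : K -> subset_omega -> Prop),
    (forall k, closed_cantor (C k)) ->
    maximal_independent (fun x => exists k, C k x) ->
    exists F : K -> nat -> nat, dominating F.
Proof.
  intros K C HC HM.
  change (maximal_independent (Iu K C)) in HM.
  pose proof (I_infinite _ HM) as Iinf.
  destruct (conv_seq_spec (Iu K C) Iinf) as [HAI [HAag [HAne Heinc]]].
  set (z := zlim (Iu K C)). set (A := Aseq (Iu K C)).
  set (FF := F K C z A).
  apply NNPP; intro Hno.
  destruct (classic (exists l : list K, forall k, In k l)) as [[l Hl]|Hinf].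
  - apply (main_contra K C HC HM z _ A HAI HAag HAne Heinc (fun n => S (FF l n))).
    intros s; exists l; split; auto. intros [N HN]. specialize (HN N (le_n N)). cbv beta in HN. unfold FF in *. lia.
  - destruct (list_surj K Hinf) as [q Hq].
    assert (Hnd : ~ dominating (fun k => FF (q k))) by (intro H; apply Hno; eexists; eauto).
    unfold dominating in Hnd. apply not_all_ex_not in Hnd as [g Hg].
    apply (main_contra K C HC HM z _ A HAI HAag HAne Heinc g).
    intros s. destruct (Hq s) as [k Hk]. exists s; split; auto.
    intro Hd; apply Hg; exists k; rewrite Hk; auto.
Qed.
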